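(* Let $\mathbf{J}\in\mathbb{R}^{n\times n}$ be a real symmetric matrix with zero diagonal, and let $\alpha,\beta>0$ be such that $\lambda_{\min}(\mathbf{J}+\alpha\mathbf{I})>0$. Let $\{\boldsymbol{x}^{(k)}\}_{k\ge0}$ be the DOCH iterates starting from an arbitrary $\boldsymbol{x}^{(0)}\in\mathbb{R}^n$. Then every limit point $\boldsymbol{x}^*$ of $\{\boldsymbol{x}^{(k)}\}$ is a critical point of $\mathcal{H}$, i.e. $\nabla\mathcal{H}(\boldsymbol{x}^* )=\mathbf{0}$.
   Context: Let $f(\boldsymbol{x})=\frac{\beta}{4}\sum_i x_i^4$, $g(\boldsymbol{x})=\frac12\boldsymbol{x}^\top(\mathbf{J}+\alpha\mathbf{I})\boldsymbol{x}$ and $\mathcal{H}=f-g$ (equivalently $\mathcal{H}(\boldsymbol{x})=\frac{\beta}{4}\sum_i x_i^4-\frac{\alpha}{2}\sum_i x_i^2-\frac12\boldsymbol{x}^\top\mathbf{J}\boldsymbol{x}$). The DOCH iterates are defined by $\boldsymbol{x}^{(k+1)}$ being the minimizer of $F_k(\boldsymbol{x})=f(\boldsymbol{x})-g(\boldsymbol{x}^{(k)})-\nabla g(\boldsymbol{x}^{(k)})^\top(\boldsymbol{x}-\boldsymbol{x}^{(k)})$; explicitly, $\boldsymbol{x}^{(k+1)}=\varphi(\beta^{-1}(\mathbf{J}+\alpha\mathbf{I})\boldsymbol{x}^{(k)})$ with $\varphi$ the componentwise real cube root. *)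

(* Defs.v *)
From HB Require Import structures.
From mathcomp Require Import all_boot all_order all_algebra.
From mathcomp Require Import all_classical all_reals all_analysis.
Set Implicit Arguments. Unset Strict Implicit. Unset Printing Implicit Defensive.
Import Order.TTheory GRing.Theory Num.Theory.
Import numFieldNormedType.Exports.
Local Open Scope ring_scope.

Definition cbrt (R : realType) (r : R) : R := Num.sg r * powR `|r| (3%:R)^-1.

Definition Hfun (R : realType) (n : nat) (J : 'M[R]_n) (alpha beta : R)
  (x : 'cV[R]_n) : R :=
  beta / 4%:R * \sum_(i < n) x i 0 ^+ 4
  - 2%:R^-1 * (x^T *m (J + alpha%:M) *m x) 0 0.

Fixpoint doch (R : realType) (n : nat) (J : 'M[R]_n) (alpha beta : R)
  (x0 : 'cV[R]_n) (k : nat) : 'cV[R]_n :=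
  match k with
  | 0 => x0
  | k'.+1 => map_mx (@cbrt R) (beta^-1 *: ((J + alpha%:M) *m doch J alpha beta x0 k'))
  end.

(* Main.v *)
Require Import Defs.
From HB Require Import structures.
From mathcomp Require Import all_boot all_order all_algebra.
From mathcomp Require Import all_classical all_reals all_analysis.
From mathcomp Require Import ring lra.
Import Order.TTheory GRing.Theory Num.Theory.
Import numFieldNormedType.Exports.
Local Open Scope classical_set_scope.
Local Open Scope ring_scope.

Section Helpers.
Context {R : realType}.

Lemma cvg_sumf (T : Type) (F : set_system T) {FF : Filter F} (I : Type)
  (r : seq I) (f : I -> T -> R) (l : I -> R) :
  (forall i, f i x @[x --> F] --> l i) ->
  (\sum_(i <- r) f i x) @[x --> F] --> \sum_(i <- r) l i.
Proof.
move=> fl; elim: r => [|i r IH].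
  rewrite big_nil.
  have -> : (fun x => \sum_(i <- [::]) f i x) = (fun=> 0) by apply/funext => x; rewrite big_nil.
  exact: cvg_cst.
rewrite big_cons.
have -> : (fun x => \sum_(j <- i :: r) f j x) = (f i + fun x => \sum_(j <- r) f j x).
  by apply/funext => x; rewrite big_cons.
exact: cvgD.
Qed.

Lemma cont_sumf (T : topologicalType) (I : Type) (r : seq I) (f : I -> T -> R) :
  (forall i, continuous (f i)) -> continuous (fun x => \sum_(i <- r) f i x).
Proof. move=> fc x; apply: cvg_sumf => i; exact: fc. Qed.

Lemma cbrt3 (r : R) : cbrt r ^+ 3 = r.
Proof.
rewrite /cbrt exprMn.
have -> : powR `|r| (3%:R)^-1 ^+ 3 = `|r|.
  rewrite -powR_mulrn ?powR_ge0 // -powRrM mulVf ?pnatr_eq0 // powRr1 //.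
have [r0|r0|->] := ltrgtP r 0.
- rewrite ltr0_sg // ltr0_norm //; ring.
- rewrite gtr0_sg // gtr0_norm //; ring.
- by rewrite sgr0 normr0 mulr0.
Qed.

Definition bb {n} (M : 'M[R]_n) (u v : 'rV[R]_n) : R := (u *m M *m v^T) 0 0.
Definition g2 {n} (u : 'rV[R]_n) : R := \sum_i u 0 i ^+ 2.

Lemma bbDl n (M : 'M[R]_n) (u v w : 'rV[R]_n) : bb M (u + v) w = bb M u w + bb M v w.
Proof. by rewrite /bb !mulmxDl mxE. Qed.
Lemma bbDr n (M : 'M[R]_n) (u v w : 'rV[R]_n) : bb M u (v + w) = bb M u v + bb M u w.
Proof. by rewrite /bb linearD /= mulmxDr mxE. Qed.
Lemma bbZl n (M : 'M[R]_n) a (u w : 'rV[R]_n) : bb M (a *: u) w = a * bb M u w.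
Proof. by rewrite /bb -!scalemxAl mxE. Qed.
Lemma bbZr n (M : 'M[R]_n) a (u w : 'rV[R]_n) : bb M u (a *: w) = a * bb M u w.
Proof. by rewrite /bb linearZ /= -scalemxAr mxE. Qed.
Lemma bb_sym n (M : 'M[R]_n) u w : M^T = M -> bb M u w = bb M w u.
Proof.
move=> sM; rewrite /bb.
have E : forall (B : 'M[R]_1), B 0 0 = B^T 0 0 by move=> B; rewrite mxE.
rewrite E.
by rewrite !trmx_mul trmxK sM mulmxA.
Qed.

Lemma bbB n (M N : 'M[R]_n) u v : bb (M - N) u v = bb M u v - bb N u v.
Proof. by rewrite /bb mulmxBr mulmxBl !mxE. Qed.

Lemma bbsc n (a : R) (u v : 'rV[R]_n) : bb (a%:M) u v = a * bb 1%:M u v.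
Proof. by rewrite /bb mul_mx_scalar mulmx1 -scalemxAl mxE. Qed.

Lemma bb1 n (u : 'rV[R]_n) : bb 1%:M u u = g2 u.
Proof. by rewrite /bb mulmx1 mxE /g2; apply: eq_bigr => i _; rewrite mxE expr2. Qed.

Lemma g2_ge0 n (u : 'rV[R]_n) : 0 <= g2 u.
Proof. by apply: sumr_ge0 => i _; exact: sqr_ge0. Qed.

Lemma g2_eq0 n (u : 'rV[R]_n) : g2 u = 0 -> u = 0.
Proof.
move=> /eqP; rewrite psumr_eq0 => [/allP H|i _]; last exact: sqr_ge0.
apply/rowP => i; rewrite mxE; apply/eqP; rewrite -sqrf_eq0.
exact: (implyP (H i (mem_index_enum i))).
Qed.

Lemma g2Z n a (u : 'rV[R]_n) : g2 (a *: u) = a ^+ 2 * g2 u.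
Proof. by rewrite /g2 mulr_sumr; apply: eq_bigr => i _; rewrite mxE exprMn. Qed.

Lemma bb0 n (M : 'M[R]_n) : bb M 0 0 = 0.
Proof. by rewrite /bb !mul0mx mxE. Qed.

Lemma homog n (M : 'M[R]_n) :
  (forall v, g2 v = 1 -> 0 <= bb M v v) -> forall u, 0 <= bb M u u.
Proof.
move=> H u; have [/g2_eq0 ->|nz] := eqVneq (g2 u) 0; first by rewrite bb0.
have gp : 0 < g2 u by rewrite lt_def nz g2_ge0.
set s := Num.sqrt (g2 u).
have s0 : 0 < s by rewrite sqrtr_gt0.
have := H (s^-1 *: u); rewrite g2Z exprVn sqr_sqrtr ?g2_ge0 // mulVf //.
move=> /(_ erefl); rewrite bbZl bbZr.
by rewrite !pmulr_rge0 // invr_gt0.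
Qed.

Lemma contX (T : topologicalType) (f : T -> R) k :
  continuous f -> continuous (fun x => f x ^+ k).
Proof.
move=> fc; elim: k => [|k IH].
  have -> : (fun x => f x ^+ 0) = (fun=> 1) by apply/funext => x; rewrite expr0.
  exact: cst_continuous.
have -> : (fun x => f x ^+ k.+1) = (f \* fun x => f x ^+ k).
  by apply/funext => x; rewrite exprS.
move=> x; apply: continuousM; [exact: fc | exact: IH].
Qed.

Lemma le_g2 n (u : 'rV[R]_n) j : u 0 j ^+ 2 <= g2 u.
Proof.
rewrite /g2 (bigD1 j) //= lerDl; apply: sumr_ge0 => i _; exact: sqr_ge0.
Qed.

Lemma cont_g2 n : continuous (@g2 n).
Proof.
apply: (@cont_sumf _ _ _ (fun i (u : 'rV[R]_n) => u 0 i ^+ 2)) => i.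
apply: contX; exact: coord_continuous.
Qed.

Lemma cont_bb n (A : 'M[R]_n) : continuous (fun u => bb A u u).
Proof.
have -> : (fun u => bb A u u) =
   (fun u : 'rV[R]_n => \sum_(j <- index_enum 'I_n)
      ((fun u : 'rV[R]_n => \sum_(i <- index_enum 'I_n) (fun i u => u 0 i * A i j) i u)
       \* (fun u : 'rV[R]_n => u 0 j)) u).
  apply/funext => u; rewrite /bb mxE; apply: eq_bigr => j _.
  by rewrite !mxE.
apply: cont_sumf => j; move=> x; apply: continuousM; last exact: coord_continuous.
apply: cont_sumf => i; move=> y; apply: continuousM; first exact: coord_continuous.
exact: cst_continuous.
Qed.

Lemma rayleigh n (A : 'M[R]_n) : A^T = A -> (forall a, eigenvalue A a -> 0 < a) ->
  exists m Mx, 0 < m /\ forall u, m * g2 u <= bb A u u /\ bb A u u <= Mx * g2 u.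
Proof.
case: n A => [|n] A sA eigA.
  exists 1, 0; split => // u.
  have -> : u = 0 by apply/rowP => -[k hk]; exfalso; move: hk; rewrite ltn0.
  by rewrite bb0 /g2 big_ord0 mulr0 mul0r lexx.
set S := (@g2 n.+1) @^-1` [set x | x = 1].
have cS : compact S.
  apply: bounded_closed_compact; last first.
    by apply: preimage_closed; [move=> u _; exact: cont_g2 | exact: closed_eq].
  rewrite /bounded_near; apply: filterS (nbhs_pinfty_ge (num_real (1 : R))).
  move=> M M1 u Su; rewrite /= [leLHS]/Num.norm /= mx_normrE.
  apply: bigmax_le; first exact: le_trans ler01 M1.
  move=> [i j] _ /=; apply: le_trans _ M1.
  have := le_g2 _ u j; rewrite Su (ord1 i) -real_normK ?num_real // => h.
  have := normr_ge0 (u 0 j); nra.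
have S0 : S !=set0.
  exists (delta_mx 0 0); rewrite /S /= /g2 (bigD1 0) //= big1 => [|i /negbTE i0].
    by rewrite !mxE !eqxx expr1n addr0.
  by rewrite !mxE i0 /= expr0n.
have [c Sc cmin] := EVT_min_rV S0 cS (continuous_subspaceT (@cont_bb _ A)).
have [C SC cmax] := EVT_max_rV S0 cS (continuous_subspaceT (@cont_bb _ A)).
rewrite inE in Sc; rewrite inE in SC.
set m := bb A c c; set Mx := bb A C C.
have Hlow : forall u, 0 <= bb (A - m%:M) u u.
  apply: homog => v gv; rewrite bbB bbsc bb1 gv mulr1 subr_ge0.
  by apply: cmin; rewrite inE.
have Hup : forall u, 0 <= bb (Mx%:M - A) u u.
  apply: homog => v gv; rewrite bbB bbsc bb1 gv mulr1 subr_ge0.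
  by apply: cmax; rewrite inE.
exists m, Mx; split; last first.
  move=> u; split.
    by have := Hlow u; rewrite bbB bbsc bb1 subr_ge0.
  by have := Hup u; rewrite bbB bbsc bb1 subr_ge0.
apply: eigA; apply/eigenvalueP.
set M' := A - m%:M.
have sM' : M'^T = M' by rewrite /M' linearB /= tr_scalar_mx sA.
have Pc : bb M' c c = 0 by rewrite bbB bbsc bb1 Sc mulr1 subrr.
set w := c *m M'.
have Hw : bb M' c w = g2 w by rewrite -bb1 /bb mulmx1.
have key t : 0 <= 2 * t * g2 w + t ^+ 2 * bb M' w w.
  have := Hlow (c + t *: w); rewrite -/M'.
  rewrite bbDl !bbDr !bbZl !bbZr Pc (bb_sym _ _ w c sM') Hw.
  move=> h; apply: le_trans h _; rewrite le_eqVlt; apply/orP; left; apply/eqP.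
  ring.
set G := g2 w; set K := bb M' w w.
have G0 : 0 <= G by exact: g2_ge0.
set k := `|K| + 1.
have k0 : 0 < k by rewrite /k ltr_pwDr // normr_ge0.
have GG : G <= 0.
  have e : k ^+ 2 * (2 * (- (G / k)) * G + (- (G / k)) ^+ 2 * K)
           = - (2 * G ^+ 2 * k) + G ^+ 2 * K.
    by field; rewrite gt_eqF.
  have h2 : 0 <= - (2 * G ^+ 2 * k) + G ^+ 2 * K.
    by rewrite -e; apply: mulr_ge0; [exact: sqr_ge0 | exact: key].
  have KK : K <= k - 1 by rewrite /k addrK ler_norm.
  have h3 : 0 <= G ^+ 2 * (k - 1 - K) by apply: mulr_ge0; [exact: sqr_ge0|lra].
  have h4 : 0 <= G ^+ 2 * k by apply: mulr_ge0; [exact: sqr_ge0|lra].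
  nra.
have w0 : w = 0 by apply: g2_eq0; apply/eqP; rewrite eq_le GG G0.
exists c.
  apply/eqP; rewrite -subr_eq0; move: w0; rewrite /w /M' mulmxBr mul_mx_scalar => ->//.
apply/eqP => c0; move: Sc; rewrite /S /preimage /= c0 /g2 big1 => [/eqP|i _].
  by rewrite eq_sym oner_eq0.
by rewrite mxE expr0n.
Qed.

Lemma bbT n (M : 'M[R]_n) (z w : 'cV[R]_n) :
  bb M z^T w^T = \sum_k z k 0 * (M *m w) k 0.
Proof.
rewrite /bb trmxK -mulmxA mxE; apply: eq_bigr => k _; by rewrite mxE.
Qed.

Lemma delta_sum n (i : 'I_n) (f : 'I_n -> R) :
  \sum_k (delta_mx i 0 : 'cV[R]_n) k 0 * f k = f i.
Proof.
rewrite (bigD1 i) //= big1 => [|k /negbTE ki]; first by rewrite mxE !eqxx mul1r addr0.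
by rewrite mxE ki mul0r.
Qed.

Lemma HfunE n (J : 'M[R]_n) alpha beta z :
  Hfun J alpha beta z = beta / 4%:R * \sum_(k < n) z k 0 ^+ 4
     - 2%:R^-1 * bb (J + alpha%:M) z^T z^T.
Proof. by rewrite /Hfun /bb trmxK. Qed.

Lemma Hshift n (J : 'M[R]_n) alpha beta (z : 'cV[R]_n) (i : 'I_n) h :
  (J + alpha%:M)^T = J + alpha%:M ->
  Hfun J alpha beta (h *: delta_mx i 0 + z) - Hfun J alpha beta z =
  beta / 4%:R * ((z i 0 + h) ^+ 4 - z i 0 ^+ 4)
  - 2%:R^-1 * (2%:R * h * ((J + alpha%:M) *m z) i 0 + h ^+ 2 * (J + alpha%:M) i i).
Proof.
rewrite !HfunE.
set A := J + alpha%:M => sA; clearbody A.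
have -> : (h *: delta_mx i 0 + z)^T = h *: (delta_mx i 0)^T + z^T.
  by rewrite linearD linearZ.
rewrite bbDl !bbDr !bbZl !bbZr -/A.
rewrite (bb_sym _ _ z^T _ sA) !bbT !delta_sum.
have -> : (A *m (delta_mx i 0 : 'cV[R]_n)) i 0 = A i i.
  rewrite mxE (eq_bigr (fun k => (delta_mx i 0 : 'cV[R]_n) k 0 * A i k)).
    by rewrite delta_sum.
  by move=> k _; rewrite mulrC.
rewrite (bigD1 i) //= [X in _ - (_ * X - _)](bigD1 i) //=.
rewrite (eq_bigr (fun k => z k 0 ^+ 4)); last first.
  by move=> k /negbTE ki; rewrite !mxE ki mulr0 add0r.
rewrite !mxE !eqxx mulr1.
ring.
Qed.

Lemma Hderiv n (J : 'M[R]_n) alpha beta (z : 'cV[R]_n) (i : 'I_n) :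
  (J + alpha%:M)^T = J + alpha%:M ->
  beta * z i 0 ^+ 3 = ((J + alpha%:M) *m z) i 0 ->
  derivable (Hfun J alpha beta) z (delta_mx i 0) /\
  'D_(delta_mx i 0) (Hfun J alpha beta) z = 0.
Proof.
set A := J + alpha%:M => sA hz.
set p := z i 0; set d := A i i.
set G := fun h : R => h * (beta / 4%:R * (6%:R * p ^+ 2 + 4%:R * p * h + h ^+ 2) - d / 2%:R).
have GE : {near 0^', G =1 (fun h => h^-1 *: ((Hfun J alpha beta \o shift z) (h *: delta_mx i 0)
          - Hfun J alpha beta z))}.
  near=> h.
  have hn0 : h != 0 by near: h; exact: nbhs_dnbhs_neq.
  rewrite /= Hshift // -/A -hz /G /p /d.
  rewrite /GRing.scale /=.
  field.
  by [].
have Gcv : G h @[h --> 0^'] --> 0.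
  apply: cvg_within_filter.
  set E := fun h : R => beta / 4%:R * (6%:R * p ^+ 2 + 4%:R * p * h + h ^+ 2) - d / 2%:R.
  have EC : E h @[h --> (0:R)] --> E 0.
    rewrite /E; apply: cvgB; last exact: cvg_cst.
    apply: cvgM; first exact: cvg_cst.
    apply: cvgD; first apply: cvgD; first exact: cvg_cst.
      apply: cvgM; [exact: cvg_cst | exact: cvg_id].
    exact: (cvgM cvg_id cvg_id).
  have L := cvgM (@cvg_id _ (nbhs (0:R))) EC.
  rewrite mul0r in L; exact: L.
have Q := cvg_trans (near_eq_cvg GE) Gcv.
split.
  rewrite /derivable; apply: (cvgP 0); exact: Q.
rewrite /derive; apply: cvg_lim; [exact: norm_hausdorff | exact: Q].
Unshelve. all: by end_near.
Qed.

Lemma bbBl n (M : 'M[R]_n) (u v w : 'rV[R]_n) : bb M (u - v) w = bb M u w - bb M v w.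
Proof. by rewrite /bb !mulmxBl !mxE. Qed.
Lemma bbBr n (M : 'M[R]_n) (u v w : 'rV[R]_n) : bb M u (v - w) = bb M u v - bb M u w.
Proof. by rewrite /bb linearB /= mulmxBr !mxE. Qed.

Lemma quartic_breg (b a c : R) : 0 < b ->
  0 <= b / 4%:R * (a ^+ 4 - c ^+ 4) - (a - c) * (b * c ^+ 3).
Proof.
move=> b0.
have -> : b / 4%:R * (a ^+ 4 - c ^+ 4) - (a - c) * (b * c ^+ 3)
   = b / 4%:R * ((a - c) ^+ 2 * ((a + c) ^+ 2 + 2%:R * c ^+ 2)) by field.
apply: mulr_ge0; first by apply: divr_ge0; [exact: ltW | exact: ler0n].
apply: mulr_ge0; first exact: sqr_ge0.
by apply: addr_ge0; [exact: sqr_ge0 | apply: mulr_ge0; [exact: ler0n | exact: sqr_ge0]].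
Qed.

Lemma quartic_lb (b M t : R) : 0 < b ->
  - (M ^+ 2 / (4%:R * b)) <= b / 4%:R * t ^+ 4 - 2%:R^-1 * (M * t ^+ 2).
Proof.
move=> b0; rewrite -subr_ge0.
have -> : b / 4%:R * t ^+ 4 - 2%:R^-1 * (M * t ^+ 2) - - (M ^+ 2 / (4%:R * b))
   = (b * t ^+ 2 - M) ^+ 2 / (4%:R * b) by field; rewrite gt_eqF.
apply: divr_ge0; first exact: sqr_ge0.
by apply: mulr_ge0; [exact: ler0n | exact: ltW].
Qed.

Lemma descent n (J : 'M[R]_n) alpha beta (x y : 'cV[R]_n) :
  (J + alpha%:M)^T = J + alpha%:M -> 0 < beta ->
  (forall j, beta * y j 0 ^+ 3 = ((J + alpha%:M) *m x) j 0) ->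
  2%:R^-1 * bb (J + alpha%:M) (y - x)^T (y - x)^T
    <= Hfun J alpha beta x - Hfun J alpha beta y.
Proof.
move=> sA b0 hy; rewrite !HfunE.
move: sA hy; set A := J + alpha%:M => sA hy; clearbody A.
have -> : (y - x)^T = y^T - x^T by rewrite linearB.
rewrite !bbBl !bbBr (bb_sym _ _ x^T y^T sA).
have E1 : bb A x^T x^T - bb A y^T x^T = \sum_k (x k 0 - y k 0) * (beta * y k 0 ^+ 3).
  rewrite -bbBl -linearB bbT; apply: eq_bigr => k _; by rewrite hy !mxE.
have E2 : 0 <= \sum_k (beta / 4%:R * (x k 0 ^+ 4 - y k 0 ^+ 4)
                  - (x k 0 - y k 0) * (beta * y k 0 ^+ 3)).
  by apply: sumr_ge0 => k _; exact: quartic_breg.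
rewrite sumrB -E1 -mulr_sumr sumrB in E2.
lra.
Qed.

Lemma Hlb n (J : 'M[R]_n) alpha beta Mx (z : 'cV[R]_n) : 0 < beta ->
  bb (J + alpha%:M) z^T z^T <= Mx * g2 z^T ->
  \sum_(k < n) - (Mx ^+ 2 / (4%:R * beta)) <= Hfun J alpha beta z.
Proof.
move=> b0 hM; rewrite HfunE.
have g2E : g2 z^T = \sum_k z k 0 ^+ 2 by rewrite /g2; apply: eq_bigr => k _; rewrite mxE.
apply: (@le_trans _ _ (\sum_k (beta / 4%:R * z k 0 ^+ 4 - 2%:R^-1 * (Mx * z k 0 ^+ 2)))).
  by apply: ler_sum => k _; exact: quartic_lb.
rewrite sumrB -!mulr_sumr -g2E.
lra.
Qed.

Lemma trB_entry n (u v : 'cV[R]_n) j : ((u - v)^T) 0 j = u j 0 - v j 0.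
Proof. by rewrite !mxE. Qed.

Lemma mulmx_diff n (A : 'M[R]_n) (u v : 'cV[R]_n) i :
  (A *m u) i 0 - (A *m v) i 0 = - \sum_j A i j * (v j 0 - u j 0).
Proof.
rewrite !mxE -sumrB -sumrN; apply: eq_bigr => j _; ring.
Qed.

Lemma mulmx_entry n (A : 'M[R]_n) (z : 'cV[R]_n) i :
  (A *m z) i 0 = \sum_j A i j * z j 0.
Proof. by rewrite mxE. Qed.

End Helpers.

Theorem propositionS8 (R : realType) (n : nat) (J : 'M[R]_n) (alpha beta : R)
  (x0 : 'cV[R]_n) :
  J^T = J -> (forall i, J i i = 0) -> 0 < alpha -> 0 < beta ->
  (forall a : R, eigenvalue (J + alpha%:M) a -> 0 < a) ->
  forall xstar : 'cV[R]_n,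
    cluster (doch J alpha beta x0 @ \oo) xstar ->
    forall i : 'I_n,
      derivable (Hfun J alpha beta) xstar (delta_mx i 0) /\
      'D_(delta_mx i 0) (Hfun J alpha beta) xstar = 0.
Proof.
move=> sJ Jd a0 b0 eig xstar clx i.
have sA : (J + alpha%:M)^T = J + alpha%:M by rewrite linearD /= sJ tr_scalar_mx.
have [m [Mx [m0 hq]]] := rayleigh _ _ sA eig.
set x := doch J alpha beta x0.
have xS : forall k j, beta * x k.+1 j 0 ^+ 3 = ((J + alpha%:M) *m x k) j 0.
  move=> k j; rewrite /x /= [X in _ * X ^+ 3]mxE cbrt3 [X in _ * X = _]mxE.
  by rewrite mulrA mulfV ?gt_eqF // mul1r.
set Hs := fun k => Hfun J alpha beta (x k).
have desc : forall k, 2%:R^-1 * bb (J + alpha%:M) (x k.+1 - x k)^T (x k.+1 - x k)^T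
    <= Hs k - Hs k.+1 by move=> k; exact: (descent _ _ _ _ _ _ sA b0 (xS k)).
have hdec : forall k, Hs k.+1 <= Hs k.
  move=> k; have h1 := desc k; have h2 := (hq (x k.+1 - x k)^T).1.
  have h3 := mulr_ge0 (ltW m0) (g2_ge0 _ (x k.+1 - x k)^T).
  lra.
have g2d : forall k j, (x k.+1 j 0 - x k j 0) ^+ 2 <= m^-1 * (2%:R * (Hs k - Hs k.+1)).
  move=> k j; have h1 := desc k; have h2 := (hq (x k.+1 - x k)^T).1.
  have h3 := le_g2 _ (x k.+1 - x k)^T j; rewrite trB_entry in h3.
  have h4 := ler_wpM2l (ltW m0) h3.
  rewrite -[X in X <= _](mulKf (lt0r_neq0 m0)); apply: ler_wpM2l; first by rewrite invr_ge0 ltW.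
  lra.
have hlb : has_lbound (range Hs).
  exists (\sum_(k < n) - (Mx ^+ 2 / (4%:R * beta))) => _ [k _ <-].
  exact: (Hlb _ _ _ _ _ _ b0 ((hq _).2)).
have hcv := nonincreasing_cvgn ((nonincreasing_seqP Hs).1 hdec) hlb.
have hcv1 : [sequence Hs n.+1]_n @ \oo --> inf (range Hs) by rewrite cvg_shiftS.
have hdiff : (fun k => Hs k - Hs k.+1) @ \oo --> 0.
  have := cvgB hcv hcv1; rewrite subrr; exact.
have dcv : forall j, (fun k => x k.+1 j 0 - x k j 0) @ \oo --> 0.
  move=> j.
  have sq : (fun k => (x k.+1 j 0 - x k j 0) ^+ 2) @ \oo --> 0.
    apply: (@squeeze_cvgr _ _ _ _ (fun=> 0) (fun k => m^-1 * (2%:R * (Hs k - Hs k.+1)))).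
    - by near=> k; rewrite sqr_ge0 g2d.
    - exact: cvg_cst.
    - have := cvgM (cvg_cst m^-1) (cvgM (cvg_cst (2%:R : R)) hdiff); rewrite !mulr0; exact.
  apply/cvgrPdist_lt => e e0.
  have H := (cvgrPdist_lt _ _).1 sq (e ^+ 2) (exprn_gt0 2 e0).
  near=> k.
  have hk : `|0 - (x k.+1 j 0 - x k j 0) ^+ 2| < e ^+ 2 by near: k; exact: H.
  rewrite !sub0r !normrN normrX in hk *.
  have := normr_ge0 (x k.+1 j 0 - x k j 0); nra.
pose Phi := fun z : 'cV[R]_n => beta * z i 0 ^+ 3 - ((J + alpha%:M) *m z) i 0.
have Lj : forall j, (fun k => (J + alpha%:M) i j * (x k.+1 j 0 - x k j 0)) @ \oo
     --> (fun=> (0:R)) j.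
  move=> j; have := cvgM (cvg_cst ((J + alpha%:M) i j)) (dcv j); rewrite mulr0; exact.
have L : (fun k => \sum_(j <- index_enum 'I_n) (J + alpha%:M) i j * (x k.+1 j 0 - x k j 0))
    @ \oo --> \sum_(j <- index_enum 'I_n) (fun=> (0:R)) j.
  exact: cvg_sumf.
rewrite big1 // in L.
have NL : (fun k => - \sum_(j <- index_enum 'I_n) (J + alpha%:M) i j * (x k.+1 j 0 - x k j 0))
    @ \oo --> (- 0 : R) by apply: cvgN.
rewrite oppr0 in NL.
have phicv : (fun k => Phi (x k)) @ \oo --> 0.
  have H : [sequence Phi (x n.+1)]_n @ \oo --> 0.
    apply: (cvg_trans _ NL); apply: near_eq_cvg; near=> k => /=.
    by rewrite /Phi xS mulmx_diff.
  by move: H; rewrite (cvg_shiftS (fun k => Phi (x k))).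
have PhiE : Phi = fun z => beta * z i 0 ^+ 3 - \sum_(j <- index_enum 'I_n)
     (fun j (z : 'cV[R]_n) => (J + alpha%:M) i j * z j 0) j z.
  by apply/funext => z; rewrite /Phi mulmx_entry.
have cPhi' : continuous (fun z : 'cV[R]_n => beta * z i 0 ^+ 3 - \sum_(j <- index_enum 'I_n)
     (fun j (z : 'cV[R]_n) => (J + alpha%:M) i j * z j 0) j z).
  move=> z; apply: (@continuousB _ _ _ (fun z : 'cV[R]_n => beta * z i 0 ^+ 3)
     (fun z : 'cV[R]_n => \sum_(j <- index_enum 'I_n)
     (fun j (z : 'cV[R]_n) => (J + alpha%:M) i j * z j 0) j z)).
    apply: (@continuousM _ _ (fun=> beta) (fun z : 'cV[R]_n => z i 0 ^+ 3)).
      exact: cst_continuous.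
    move: z; apply: (contX _ (fun z : 'cV[R]_n => z i 0) 3); exact: coord_continuous.
  apply: (@cont_sumf R _ _ (index_enum 'I_n) (fun j (z : 'cV[R]_n) => (J + alpha%:M) i j * z j 0)) => j y.
  apply: continuousM; [exact: cst_continuous | exact: coord_continuous].
have cPhi : continuous Phi by rewrite PhiE.
have Phi0 : Phi xstar = 0.
  apply/eqP; apply/negPn/negP => nz.
  set e := `|Phi xstar| / 2%:R.
  have e0 : 0 < e by rewrite divr_gt0 // normr_gt0.
  have N1 : \forall k \near \oo, `|0 - Phi (x k)| < e.
    by move/cvgrPdist_lt: phicv => /(_ e e0).
  have N2 : \forall z \near xstar, `|Phi xstar - Phi z| < e.
    by move/cvgrPdist_lt: (cPhi xstar) => /(_ e e0).
  have [z [/= Az Bz]] := clx [set z | `|0 - Phi z| < e] [set z | `|Phi xstar - Phi z| < e] N1 N2.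
  rewrite sub0r normrN in Az.
  have := ler_normD (Phi xstar - Phi z) (Phi z); rewrite subrK.
  rewrite /e in Az Bz; lra.
apply: (Hderiv _ _ _ _ _ _ sA).
by apply/eqP; rewrite -subr_eq0; apply/eqP; exact: Phi0.
Unshelve. all: by end_near.
Qed.
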